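(* Let $\gamma$ be a generator of $\mathbb{F}_{q^m}^*$, let $\ell\in\{0,1,\dots,q-2\}$, and let $\beta_1,\dots,\beta_m\in\mathbb{F}_{q^m}$ be linearly independent over $\mathbb{F}_q$. Then the $m\times m$ matrix $M$ whose $(i,j)$ entry, for $i=0,\dots,m-1$ and $j=1,\dots,m$, is $\gamma^{\ell(1+q+\cdots+q^{i-1})}\beta_j^{q^i-1}$ (so row $i=0$ is all ones) is full rank. *)

(* Defs.v *)
From HB Require Import structures.
From mathcomp Require Import all_boot all_order all_algebra all_field.
Set Implicit Arguments. Unset Strict Implicit. Unset Printing Implicit Defensive.
Import GRing.Theory.
Local Open Scope ring_scope.

(* The m x m matrix of Corollary 2.17: row i (0 <= i < m), column j
   (index j : 'I_m standing for j+1), entry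
   gamma^(l*(1+q+...+q^(i-1))) * beta_j^(q^i - 1). *)
Definition cor_matrix (L : fieldType) (q m l : nat) (gamma : L)
  (beta : m.-tuple L) : 'M[L]_m :=
  \matrix_(i < m, j < m)
     (gamma ^+ (l * \sum_(k < i) q ^ k)%N * (tnth beta j) ^+ (q ^ i - 1)%N).

(* Main.v *)
Require Import Defs.
From HB Require Import structures.
From mathcomp Require Import all_boot all_order all_algebra all_field.
From mathcomp Require Import zify.
Import GRing.Theory.
Local Open Scope ring_scope.

Lemma moore_key (F : finFieldType) (L : fieldExtType F) (m : nat)
  (beta : m.-tuple L) (hfree : free beta) (c : 'I_m -> L) :
  (forall j : 'I_m, \sum_(i < m) c i * tnth beta j ^+ (#|F| ^ i)%N = 0) ->
  forall i, c i = 0.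
Proof.
move=> hc i0; apply/eqP; apply: contraT => ci0.
set q := #|F|.
have q1 : (1 < q)%N := finNzRing_gt1 F.
have hadd : forall k (x y : L), (x + y) ^+ (q ^ k) = x ^+ (q ^ k) + y ^+ (q ^ k).
  have [p pr pF] := finPcharP F.
  move=> k x y; apply: exprDn_pchar.
  rewrite /q (card_pprimeChar pF) -expnM pnatX pnatE //.
  by rewrite (pchar_lalg L) pF.
have hsc : forall k (a : F) (x : L), (a *: x) ^+ (q ^ k) = a *: x ^+ (q ^ k).
  move=> k a x; rewrite exprZn; congr (_ *: _).
  elim: k => [|k IH]; first by rewrite expr1.
  by rewrite expnSr exprM IH expf_card.
have hsum : forall k (a : 'I_m -> F),
    (\sum_j a j *: beta`_j) ^+ (q ^ k) = \sum_j a j *: beta`_j ^+ (q ^ k).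
  move=> k a.
  have z0 : (0 : L) ^+ (q ^ k) = 0.
    by rewrite expr0n expn_eq0 (negbTE (lt0n_neq0 (ltnW q1))).
  rewrite (big_morph (fun x : L => x ^+ (q ^ k)) (hadd k) z0).
  by apply: eq_bigr => j _; apply: hsc.
have hc' : forall j : 'I_m, \sum_(i < m) c i * beta`_j ^+ (q ^ i) = 0.
  by move=> j; rewrite -(tnth_nth 0 beta j); apply: hc.
pose P : {poly L} := \sum_(i < m) c i *: 'X^(q ^ i).
have coefP : P`_(q ^ i0) = c i0.
  rewrite /P coef_sum (bigD1 i0) //= coefZ coefXn eqxx mulr1 big1 ?addr0 //.
  move=> i ne; rewrite coefZ coefXn eqn_exp2l //.
  have -> : (i0 == i :> nat) = false by rewrite eq_sym; exact: negbTE ne.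
  by rewrite mulr0.
have Pnz : P != 0.
  by apply/eqP => P0; move: ci0; rewrite -coefP P0 coef0 eqxx.
have hm : (0 < m)%N by case: i0 {coefP ci0} => i /= Hi; apply: leq_ltn_trans Hi.
have sizeP : (size P <= (q ^ m.-1).+1)%N.
  apply/leq_sizeP => k hk; rewrite /P coef_sum big1 // => i _.
  rewrite coefZ coefXn.
  have : (q ^ i < k)%N.
    apply: leq_trans hk; rewrite ltnS leq_exp2l //.
    by rewrite -ltnS prednK.
  by move/gtn_eqF => ->; rewrite mulr0.
pose rs := map (fun a : {ffun 'I_m -> F} => \sum_(j < m) a j *: beta`_j)
             (enum {ffun 'I_m -> F}).
have urs : uniq rs.
  rewrite map_inj_uniq ?enum_uniq // => a b hab; apply/ffunP => j.
  have h0 : \sum_(j < m) (a j - b j) *: beta`_j = 0.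
    by rewrite (eq_bigr _ (fun j _ => scalerBl _ _ _)) sumrB hab subrr.
  by move/freeP: hfree => /(_ (fun j => a j - b j) h0 j) /eqP; rewrite subr_eq0 => /eqP.
have rrs : all (root P) rs.
  apply/allP => x /mapP [a _ ->]; rewrite rootE /P horner_sum.
  under eq_bigr => i _ do rewrite hornerZ hornerXn hsum mulr_sumr.
  rewrite exchange_big /= big1 // => j _.
  under eq_bigr => i _ do rewrite -scalerAr.
  by rewrite -scaler_sumr hc' scaler0.
have := max_poly_roots Pnz rrs urs.
rewrite size_map -cardE card_ffun card_ord => h.
have := leq_trans h sizeP; rewrite ltnS leq_exp2l //.
by case: (m) hm => // n _; rewrite /= ltnn.
Qed.

Theorem corollary2p17 (F : finFieldType) (L : fieldExtType F) (m : nat)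
  (hdim : \dim (fullv : {vspace L}) = m)
  (gamma : L) (hgen : forall x : L, x != 0 -> exists k : nat, x = gamma ^+ k)
  (l : nat) (hl : (l <= #|F| - 2)%N)
  (beta : m.-tuple L) (hfree : free beta) :
  \rank (cor_matrix #|F| l gamma beta) = m.
Proof.
set q := #|F|.
have q1 : (1 < q)%N := finNzRing_gt1 F.
have hb : forall j, tnth beta j != 0 := fun j => free_not0 hfree (mem_tnth j beta).
have hg : forall i : nat, gamma ^+ (l * \sum_(k < i) q ^ k)%N != 0.
  move=> i; case l0: l => [|l']; first by rewrite mul0n expr0 oner_eq0.
  rewrite expf_neq0 //; apply/eqP => g0.
  have [a ha] : exists a : F, a \notin [set 0; 1].
    case: (pickP (fun a : F => a \notin [set 0; 1])) => [a ha|h]; first by exists a.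
    exfalso.
    have : (q <= 2)%N.
      rewrite /q -cardsT; apply: leq_trans (subset_leq_card (_ : [set: F] \subset [set 0; 1])) _.
        by apply/subsetP => x _; move: (h x) => /= /negbFE.
      by rewrite cards2; case: (_ != _).
    move: hl; rewrite l0 /q; lia.
  have anz : a%:A != 0 :> L.
    by rewrite scaler_eq0 oner_eq0 orbF; apply: contraNneq ha => ->; rewrite !inE eqxx.
  have [k hk] := hgen _ anz.
  move: hk; rewrite g0 expr0n; case: (k == 0%N) => /= hk.
    move: ha; rewrite !inE negb_or => /andP [_ /eqP]; apply.
    apply/eqP; rewrite -subr_eq0.
    have : (a - 1) *: (1 : L) == 0 by rewrite scalerBl scale1r hk subrr.
    by rewrite scaler_eq0 oner_eq0 orbF.
  by move: anz; rewrite hk eqxx.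
suff: row_free (cor_matrix q l gamma beta) by move/eqP.
rewrite -kermx_eq0; apply/rowV0P => v /sub_kermxP vM0.
apply/rowP => i0; rewrite mxE.
suff: v 0 i0 * gamma ^+ (l * \sum_(k < i0) q ^ k)%N == 0.
  by rewrite mulf_eq0 (negbTE (hg _)) orbF => /eqP.
apply/eqP; apply: (@moore_key F L m beta hfree (fun i => v 0 i * gamma ^+ (l * \sum_(k < i) q ^ k)%N)) => j.
have := congr1 (fun A : 'M_(1, m) => A 0 j * tnth beta j) vM0.
rewrite /= !mxE mul0r mulr_suml => H; apply: etrans H.
apply: eq_bigr => i _; rewrite !mxE -!mulrA -exprSr subn1 prednK //.
by rewrite expn_gt0 (ltnW q1).
Qed.
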